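(* Let $n$ and $\delta$ be positive integers with $n/2 < \delta \le 2n/3$, and write $\delta = (1-\beta)n$ (so $1/3\le\beta<1/2$ and $p=2$). Then $$k_3(n,\delta) \ge g_3(\beta)\,n^3 = \tfrac12(1-2\beta)(1-\beta)\beta\, n^3 .$$ Moreover, equality $k_3(n,\delta)=g_3(\beta)n^3$ holds if and only if $(n,\beta)$ is feasible, and in that case a graph $G$ of order $n$ with minimum degree $\delta$ has exactly $g_3(\beta)n^3$ triangles if and only if $G\in\mathcal{G}(n,\beta)$.
   Context: All graphs are finite and simple. For a graph $G$, $k_r(G)$ denotes the number of $r$-cliques (complete subgraphs on $r$ vertices) of $G$. For positive integers $n,\delta$, $k_r(n,\delta)$ is the minimum of $k_r(G)$ over all graphs $G$ of order $n$ with minimum degree $\delta$. Throughout, $\delta=(1-\beta)n$ with $0<\beta<1$ (so $\beta n$ is an integer), and $p=\lceil \beta^{-1}\rceil-1$, so $1/(p+1)\le \beta<1/p$. For such $\beta$ and integers $r$, define $$g_r(\beta)=\binom{p-1}{r}\beta^{r}+\binom{p-1}{r-1}(1-(p-1)\beta)\beta^{r-1}+\frac12\binom{p-1}{r-2}(1-p\beta)(1-(p-1)\beta)\beta^{r-2},$$ where $p=\lceil\beta^{-1}\rceil-1$ and $\binom{x}{y}=0$ if $x<y$ or $y<0$. The family $\mathcal{G}(n,\beta)$ (defined only when $n$ and $(1-\beta)n$ are positive integers not both odd, $0<\beta<1$) consists of all graphs $G$ on vertex set $V$ with $|V|=n$ for which there is a partition $V=V_0\cup V_1\cup\dots\cup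 V_{p-1}$ with $|V_0|=(1-(p-1)\beta)n$ and $|V_i|=\beta n$ for $1\le i\le p-1$, such that: for $0\le i<j\le p-1$ every vertex of $V_i$ is adjacent to every vertex of $V_j$; for $1\le i\le p-1$, $V_i$ is an independent set; and $G[V_0]$ is a $(1-p\beta)n$-regular graph whose number of triangles is minimum among all $(1-p\beta)n$-regular graphs on $|V_0|$ vertices. The pair $(n,\beta)$ is called feasible if $\mathcal{G}(n,\beta)$ is defined and $G[V_0]$ is triangle-free for $G\in\mathcal{G}(n,\beta)$ (equivalently, some $(1-p\beta)n$-regular triangle-free graph on $(1-(p-1)\beta)n$ vertices exists). *)

(* Defs.v *)
From HB Require Import structures.
From mathcomp Require Import all_boot all_order all_algebra.
Set Implicit Arguments. Unset Strict Implicit. Unset Printing Implicit Defensive.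
Import Order.TTheory GRing.Theory Num.Theory.

Definition simple_graph (V : finType) (e : rel V) : Prop :=
  (forall x y, e x y = e y x) /\ (forall x, ~~ e x x).

Definition deg (V : finType) (e : rel V) (x : V) : nat := #|[set y | e x y]|.

Definition has_mindeg (V : finType) (e : rel V) (d : nat) : Prop :=
  (exists x, deg e x = d) /\ (forall x, d <= deg e x).

Definition is_clique (V : finType) (e : rel V) (r : nat) (A : {set V}) : bool :=
  (#|A| == r) && [forall x in A, forall y in A, (x != y) ==> e x y].

Definition kr (V : finType) (e : rel V) (r : nat) : nat :=
  #|[set A : {set V} | is_clique e r A]|.

Definition kr_in (V : finType) (e : rel V) (S : {set V}) (r : nat) : nat :=
  #|[set A : {set V} | (A \subset S) && is_clique e r A]|.

Definition regular (V : finType) (e : rel V) (d : nat) : Prop :=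
  forall x, deg e x = d.

Definition rel_of (n : nat) (E : {set 'I_n * 'I_n}) : rel 'I_n :=
  fun x y => (x, y) \in E.

Definition simpleb (n : nat) (E : {set 'I_n * 'I_n}) : bool :=
  [forall x, forall y, ((x, y) \in E) == ((y, x) \in E)] && [forall x, (x, x) \notin E].

Definition mindegb (n : nat) (E : {set 'I_n * 'I_n}) (d : nat) : bool :=
  [exists x, deg (rel_of E) x == d] && [forall x, d <= deg (rel_of E) x].

(* The default value n ^ r (>= C(n,r), an upper
   bound for any k_r(G)) is only returned when no such graph exists. *)
Definition kr_min (r n d : nat) : nat :=
  \big[minn/n ^ r]_(E : {set 'I_n * 'I_n} | simpleb E && mindegb E d) kr (rel_of E) r.

(* Parametrisation: b = beta * n (an integer), with 0 < b < n.
   p = ceil(n / b) - 1 = ceil(1/beta) - 1. *)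
Definition pp (n b : nat) : nat := (n + b - 1) %/ b - 1.

(* g_r(beta) * n^r, written in terms of n and b = beta n (homogeneous of degree r). *)
Definition bin (x y : int) : nat :=
  match x, y with Posz x', Posz y' => 'C(x', y') | _, _ => 0%N end.

Local Open Scope ring_scope.
Definition gr_n (r n b : nat) : rat :=
  let p := pp n b in
  let B := (b%:R : rat) in
  (bin (p%:Z - 1) r%:Z)%:R * B ^+ r
  + (bin (p%:Z - 1) (r%:Z - 1))%:R * (n%:R - (p%:R - 1) * B) * B ^+ r.-1
  + (bin (p%:Z - 1) (r%:Z - 2))%:R / 2%:R
      * (n%:R - p%:R * B) * (n%:R - (p%:R - 1) * B) * B ^+ r.-2.

Local Close Scope ring_scope.

(* Membership of G (on vertex type V, |V| = n) in the family G(n, beta), b = beta n.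
   part x = i means x \in V_i (i = 0 .. p-1). *)
Definition in_family (n b : nat) (V : finType) (e : rel V) : Prop :=
  let p := pp n b in
  exists part : V -> 'I_p,
    let Vi := fun i : nat => [set x | val (part x) == i] in
    [/\ #|Vi 0%N| = n - (p - 1) * b,
        (forall i, (0 < i < p)%N -> #|Vi i| = b),
        (forall x y, part x != part y -> e x y),
        (forall x y, part x = part y -> val (part x) != 0%N -> ~~ e x y) &
        (forall x, x \in Vi 0%N -> #|[set y in Vi 0%N | e x y]| = n - p * b) /\
        (forall f : rel 'I_(n - (p - 1) * b), simple_graph f -> regular f (n - p * b) ->
           kr_in e (Vi 0%N) 3 <= kr f 3)].

(* (n, beta) feasible: G(n,beta) defined (n and (1-beta)n not both odd) and
   some (1 - p beta) n - regular triangle-free graph on (1-(p-1)beta) n vertices exists. *)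
Definition feasible (n b : nat) : Prop :=
  let p := pp n b in
  ~~ (odd n && odd (n - b)) /\
  exists f : rel 'I_(n - (p - 1) * b),
    [/\ simple_graph f, regular f (n - p * b) & kr f 3 = 0].

(* Main.v *)
Require Import Defs.
From HB Require Import structures.
From mathcomp Require Import all_boot all_order all_algebra.
From Stdlib Require Import Lia Ring ArithRing.
Set Implicit Arguments. Unset Strict Implicit. Unset Printing Implicit Defensive.

Module M1.

Section Graph.
Variable (V : finType) (e : rel V).
Hypothesis esym : forall x y, e x y = e y x.
Hypothesis eirr : forall x, ~~ e x x.

Definition Nb x := [set y | e x y].
Definition cn x y := #|Nb x :&: Nb y|.
Definition trn x y z : nat := e x y * e y z * e x z.
Definition tr := \sum_x \sum_y \sum_z trn x y z.

Lemma card_predE (P : pred V) : #|[set z | P z]| = \sum_z P z.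
Proof.
rewrite -sum1_card big_mkcond /=; apply: eq_bigr => z _; rewrite inE.
by case: (P z).
Qed.

Lemma cnE x y : cn x y = \sum_z e x z * e y z.
Proof.
rewrite (eq_bigr (fun z => (e x z && e y z : nat))); last by move=> z _; rewrite mulnb.
rewrite /cn -(card_predE (fun z => e x z && e y z)); apply: eq_card => z.
by rewrite !inE.
Qed.

Lemma degE x : deg e x = \sum_y e x y.
Proof. by rewrite /deg (card_predE (e x)). Qed.

Lemma swap3 (F : V -> V -> V -> nat) :
  \sum_x \sum_y \sum_z F x y z = \sum_x \sum_y \sum_z F x z y.
Proof. by apply: eq_bigr => x _; rewrite exchange_big. Qed.

Lemma rot3 (F : V -> V -> V -> nat) :
  \sum_x \sum_y \sum_z F x y z = \sum_x \sum_y \sum_z F z x y.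
Proof.
rewrite [RHS](eq_bigr (fun x => \sum_z \sum_y F z x y)); last first.
  by move=> x _; rewrite exchange_big.
by rewrite [RHS]exchange_big.
Qed.

Lemma trn_rot x y z : trn z x y = trn x y z.
Proof. rewrite /trn [e z x]esym [e z y]esym; rewrite -!multE; ring. Qed.

Lemma trn_swap x y z : trn x z y = trn x y z.
Proof. rewrite /trn [e z y]esym; rewrite -!multE; ring. Qed.

Lemma sum_tri_g (g : V -> V -> nat) :
  \sum_x \sum_y \sum_z trn x y z * g x y = \sum_x \sum_y e x y * cn x y * g x y.
Proof.
apply: eq_bigr => x _; apply: eq_bigr => y _.
rewrite cnE big_distrr big_distrl /=; apply: eq_bigr => z _.
rewrite /trn; rewrite [e y z]esym; rewrite -!multE; ring.
Qed.

Lemma sum_tri_3 (g : V -> V -> nat) :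
  \sum_x \sum_y \sum_z trn x y z * (g x y + g y z + g x z)
  = 3 * \sum_x \sum_y e x y * cn x y * g x y.
Proof.
rewrite -sum_tri_g.
have E1 : \sum_x \sum_y \sum_z trn x y z * g y z = \sum_x \sum_y \sum_z trn x y z * g x y.
  rewrite rot3; apply: eq_bigr => x _; apply: eq_bigr => y _; apply: eq_bigr => z _.
  by rewrite trn_rot.
have E2 : \sum_x \sum_y \sum_z trn x y z * g x z = \sum_x \sum_y \sum_z trn x y z * g x y.
  rewrite swap3; apply: eq_bigr => x _; apply: eq_bigr => y _; apply: eq_bigr => z _.
  by rewrite trn_swap.
have -> : \sum_x \sum_y \sum_z trn x y z * (g x y + g y z + g x z) =
  \sum_x \sum_y \sum_z trn x y z * g x y + \sum_x \sum_y \sum_z trn x y z * g y z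
  + \sum_x \sum_y \sum_z trn x y z * g x z.
  rewrite -!big_split /=; apply: eq_bigr => x _; rewrite -!big_split /=.
  apply: eq_bigr => y _; rewrite -!big_split /=; apply: eq_bigr => z _.
  by rewrite !mulnDr.
by rewrite E1 E2 -[3]/(1+1+1) !mulnDl mul1n.
Qed.

Lemma tr_edges : tr = \sum_x \sum_y e x y * cn x y.
Proof.
have := sum_tri_g (fun _ _ => 1); rewrite /tr.
under eq_bigr do under eq_bigr do under eq_bigr do rewrite muln1.
move=> ->; apply: eq_bigr => x _; apply: eq_bigr => y _; by rewrite muln1.
Qed.

End Graph.

End M1.
Import M1.

Module M2.

Lemma card3 (T : finType) (x y z : T) : x != y -> y != z -> x != z ->
  #|[set x; y; z]| = 3.
Proof.
move=> xy yz xz.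
rewrite setUC cardsU1 cards2 xy !inE negb_or eq_sym xz eq_sym yz.
by [].
Qed.

Lemma sum_mem (T : finType) (B : {set T}) : \sum_z (z \in B : nat) = #|B|.
Proof.
rewrite -sum1_card [RHS]big_mkcond /=; apply: eq_bigr => z _.
by case: (z \in B).
Qed.

Lemma sum_andl (T : finType) (c : bool) (Q : pred T) :
  \sum_z (c && Q z : nat) = c * \sum_z (Q z : nat).
Proof. by case: c; rewrite ?mul1n ?mul0n //; rewrite big1. Qed.

Lemma in3P (T : finType) (x y z u : T) :
  u \in [set x; y; z] -> [\/ u = x, u = y | u = z].
Proof. by rewrite !inE => /orP [/orP [] | ] /eqP ->; [apply: Or31 | apply: Or32 | apply: Or33]. Qed.

Section Graph2.
Variable (V : finType) (e : rel V).
Hypothesis esym : forall x y, e x y = e y x.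
Hypothesis eirr : forall x, ~~ e x x.

Lemma adj_neq x y : e x y -> x != y.
Proof. by apply: contraTneq => ->; apply: eirr. Qed.

Lemma clique3P (A : {set V}) x y z :
  is_clique e 3 A -> (trn e x y z * (A == [set x; y; z]) =
  [&& x \in A, y \in A, z \in A, x != y, y != z & x != z])%N.
Proof.
case/andP=> /eqP cA /forallP cl.
have adj : forall u v, u \in A -> v \in A -> u != v -> e u v.
  move=> u v uA vA uv; have := cl u; rewrite uA /= => /forallP /(_ v).
  by rewrite vA uv.
rewrite /trn.
case Exy: (e x y); case Eyz: (e y z); case Exz: (e x z); rewrite ?mul0n ?mul1n /=.
- case: eqP => [->|AS] /=.
    by rewrite !inE !eqxx !orbT /= (adj_neq Exy) (adj_neq Eyz) (adj_neq Exz).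
  suff -> : [&& x \in A, y \in A, z \in A, x != y, y != z & x != z] = false by [].
  apply/negbTE/and4P => [] [xA yA zA /and3P [xy yz xz]].
  apply: AS; apply/eqP; rewrite eq_sym eqEcard card3 // cA leqnn andbT.
  by apply/subsetP => u /in3P [] ->.
all: suff -> : [&& x \in A, y \in A, z \in A, x != y, y != z & x != z] = false by [].
all: apply/negbTE/and4P => [] [xA yA zA /and3P [xy yz xz]].
all: by [rewrite adj in Exz | rewrite adj in Eyz | rewrite adj in Exy].
Qed.

Lemma clique3_count (A : {set V}) : is_clique e 3 A ->
  \sum_x \sum_y \sum_z trn e x y z * (A == [set x; y; z]) = 6.
Proof.
move=> cA; have /andP [/eqP c3 _] := cA.
under eq_bigr do under eq_bigr do under eq_bigr do rewrite clique3P //.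
have step1 : forall x y, \sum_z ([&& x \in A, y \in A, z \in A, x != y, y != z & x != z] : nat)
   = [&& x \in A, y \in A & x != y].
  move=> x y.
  rewrite (eq_bigr (fun z => ([&& x \in A, y \in A & x != y] && (z \in A :\ x :\ y) : nat))); last first.
    move=> z _; rewrite !inE [y == z]eq_sym [x == z]eq_sym.
    by case: (x \in A); case: (y \in A); case: (z \in A); case: (x == y); case: (z == y); case: (z == x).
  rewrite sum_andl sum_mem.
  case H: [&& x \in A, y \in A & x != y] => //; move/and3P: H => [xA yA xy].
  have := cardsD1 x A; rewrite xA c3 => /eqP; rewrite eqSS => /eqP h1.
  have h2 : y \in A :\ x by rewrite !inE yA eq_sym xy.
  have := cardsD1 y (A :\ x); rewrite h2 -h1 => /eqP; rewrite eqSS => /eqP <-.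
  by rewrite mul1n.
under eq_bigr do under eq_bigr do rewrite step1.
have step2 : forall x, \sum_y ([&& x \in A, y \in A & x != y] : nat) = (x \in A) * 2.
  move=> x.
  rewrite (eq_bigr (fun y => ((x \in A) && (y \in A :\ x) : nat))); last first.
    by move=> y _; rewrite !inE [y == x]eq_sym; case: (x \in A); case: (y \in A); case: (x == y).
  rewrite sum_andl sum_mem.
  case xA: (x \in A) => //.
  have := cardsD1 x A; rewrite xA c3 => /eqP; rewrite eqSS => /eqP h1.
  by rewrite -h1.
under eq_bigr do rewrite step2.
by rewrite -big_distrl /= sum_mem c3.
Qed.

Lemma kr3_tr : (6 * kr e 3 = tr e)%N.
Proof.
rewrite /tr.
have step : forall x y z, trn e x y z =
  \sum_(A | is_clique e 3 A) trn e x y z * (A == [set x; y; z]).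
  move=> x y z.
  case T1: (trn e x y z == 0%N).
    by rewrite (eqP T1) big1 // => A _; rewrite mul0n.
  have Exyz : trn e x y z = 1%N.
    by move: T1; rewrite /trn; case: (e x y); case: (e y z); case: (e x z).
  have cS : is_clique e 3 [set x; y; z].
    move: Exyz; rewrite /trn.
    case Exy: (e x y); case Eyz: (e y z); case Exz: (e x z) => // _.
    rewrite /is_clique card3 ?(adj_neq Exy) ?(adj_neq Eyz) ?(adj_neq Exz) //=.
    apply/forallP => u; apply/implyP => /in3P Hu.
    apply/forallP => v; apply/implyP => /in3P Hv.
    apply/implyP => uv.
    case: Hu uv => ->; case: Hv => -> //; rewrite ?eqxx //;
    rewrite ?Exy ?Eyz ?Exz // => _; by rewrite esym ?Exy ?Eyz ?Exz.
  rewrite (bigD1 [set x; y; z]) //= eqxx Exyz muln1 big1 ?addn0 // => A /andP [_ ne].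
  by rewrite (negbTE ne) muln0.
have -> : (\sum_x \sum_y \sum_z trn e x y z =
   \sum_x \sum_y \sum_z \sum_(A | is_clique e 3 A) trn e x y z * (A == [set x; y; z]))%N.
  by apply: eq_bigr => x _; apply: eq_bigr => y _; apply: eq_bigr => z _; apply: step.
rewrite (eq_bigr (fun x => \sum_(A | is_clique e 3 A) \sum_y \sum_z trn e x y z * (A == [set x; y; z]))); last first.
  move=> x _; rewrite (eq_bigr (fun y => \sum_(A | is_clique e 3 A) \sum_z trn e x y z * (A == [set x; y; z]))); last by move=> y _; rewrite exchange_big.
  by rewrite exchange_big.
rewrite exchange_big /= (eq_bigr (fun _ => 6%N)); last by move=> A cA; apply: clique3_count.
rewrite sum_nat_const /kr mulnC; congr (_ * _)%N.
by apply: eq_card => A; rewrite inE.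
Qed.

End Graph2.

End M2.
Import M2.

Module M3.

Ltac to_prop := repeat match goal with
 | H : is_true (leq _ _) |- _ => move/ssrnat.leP: H => H
 | |- is_true (leq _ _) => apply/ssrnat.leP
 end.
Ltac natprep := to_prop; change muln with Nat.mul in *; change addn with Nat.add in *;
  change subn with Nat.sub in *.
Ltac natlia := intros; natprep; lia.
Ltac natnia := intros; natprep; nia.

Section Graph3.
Variable (V : finType) (e : rel V).
Hypothesis esym : forall x y, e x y = e y x.
Hypothesis eirr : forall x, ~~ e x x.

Definition k3 x y z := #|Nb e x :&: Nb e y :&: Nb e z|.

Lemma deg_Nb x : deg e x = #|Nb e x|.
Proof. by []. Qed.

Lemma pair_bound x y : (deg e x + deg e y <= cn e x y + #|V|)%N.
Proof.
rewrite !deg_Nb /cn -cardsUI.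
by rewrite [X in (X <= _)%N]addnC leq_add2l max_card.
Qed.

Lemma tri_bound x y z :
  (deg e x + deg e y + deg e z + k3 x y z <= cn e x y + cn e x z + cn e y z + #|V|)%N.
Proof.
rewrite !deg_Nb /cn /k3.
set X := Nb e x; set Y := Nb e y; set Z := Nb e z.
have h1 := cardsUI (Z :&: X) (Z :&: Y).
have e1 : (Z :&: X) :|: (Z :&: Y) = Z :&: (X :|: Y) by rewrite setIUr.
have e2 : (Z :&: X) :&: (Z :&: Y) = X :&: Y :&: Z.
  by rewrite setIACA setIid setIC.
have h2 := cardsUI Z (X :|: Y).
have h3 := cardsUI X Y.
have h4 := max_card (Z :|: (X :|: Y)).
rewrite e1 e2 in h1.
rewrite [X :&: Z]setIC [Y :&: Z]setIC.
move: h1 h2 h3 h4; natlia.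
Qed.

Variable (d : nat).
Hypothesis degd : forall x, (d <= deg e x)%N.
Hypothesis h2d : (#|V| < 2 * d)%N.
Hypothesis h3d : (3 * d <= 2 * #|V|)%N.

Let n := #|V|.
Let b := (n - d)%N.
Let s := (d - b)%N.

Lemma params : [/\ (0 < s)%N, (s <= b)%N, n = (2 * b + s)%N & d = (b + s)%N].
Proof. rewrite /s /b /n; move: h2d h3d => h2 h3; split; natlia. Qed.

Lemma cn_ge x y : (s <= cn e x y)%N.
Proof.
have := pair_bound x y; have := degd x; have := degd y; rewrite /s /b /n.
move: h2d; rewrite /n; natlia.
Qed.

Definition tp x y := minn (cn e x y) b.

Lemma edge_ineq t : (s <= t)%N -> (t * minn t b + s * b <= (s + b) * t)%N.
Proof.
have [hs hb _ _] := params.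
move=> st; case: (leqP t b) => tb.
  move: st tb hb; natnia.
move: st tb hb; natnia.
Qed.

Lemma tri_ineq x y z : (2 * s + b <= tp x y + tp y z + tp x z)%N.
Proof.
have [hs hb hn hd] := params.
have := tri_bound x y z; have := degd x; have := degd y; have := degd z.
have := cn_ge x y; have := cn_ge y z; have := cn_ge x z.
rewrite /tp -/n.
case: (leqP (cn e x y) b) => h1; case: (leqP (cn e y z) b) => h2; case: (leqP (cn e x z) b) => h3;
move: h1 h2 h3 hs hb hn hd; natlia.
Qed.

Definition Wsum := (\sum_x \sum_y e x y * cn e x y * tp x y)%N.
Definition Eo := (\sum_x \sum_y (e x y : nat))%N.

Lemma Eo_ge : (n * d <= Eo)%N.
Proof.
rewrite /Eo /n -sum1_card big_distrl /=; apply: leq_sum => x _.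
by rewrite mul1n -degE.
Qed.

Lemma H1 : (tr e * (2 * s + b) <= 3 * Wsum)%N.
Proof.
rewrite /Wsum -sum_tri_3 // /tr big_distrl /=; apply: leq_sum => x _.
rewrite big_distrl /=; apply: leq_sum => y _.
rewrite big_distrl /=; apply: leq_sum => z _.
by rewrite leq_mul2l tri_ineq orbT.
Qed.

Lemma H2 : (Wsum + s * b * Eo <= (s + b) * tr e)%N.
Proof.
rewrite /Wsum /Eo tr_edges // big_distrr -big_split /= big_distrr /=.
apply: leq_sum => x _.
rewrite big_distrr -big_split /= big_distrr /=; apply: leq_sum => y _.
case: (e x y); rewrite ?mul0n ?muln0 ?mul1n ?muln1 //.
exact: edge_ineq (cn_ge x y).
Qed.

Lemma main_bound : (3 * s * b * d <= tr e)%N.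
Proof.
have [hs hb hn hd] := params.
have h1 := H1; have h2 := H2; have h3 := Eo_ge.
have h4 : (3 * s * b * Eo <= n * tr e)%N by move: h1 h2; rewrite hn; natlia.
have h5 : (3 * s * b * (n * d) <= 3 * s * b * Eo)%N by rewrite leq_mul2l h3 orbT.
have n0 : (0 < n)%N by rewrite hn; move: hs; natlia.
rewrite -(leq_pmul2l n0); apply: leq_trans h4.
by apply: leq_trans h5; rewrite mulnCA.
Qed.

End Graph3.

End M3.
Import M3.

Module M4.

Lemma sum_eq_pw (I : finType) (F G : I -> nat) :
  (forall i, F i <= G i)%N -> (\sum_i F i = \sum_i G i)%N -> forall i, F i = G i.
Proof.
move=> le eqs i; apply/eqP; rewrite eqn_leq le /=; rewrite leqNgt; apply/negP => lt.
move: eqs; rewrite (bigD1 i) //= [in RHS](bigD1 i) //=.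
have : (\sum_(j | j != i) F j <= \sum_(j | j != i) G j)%N by apply: leq_sum.
move: lt; natlia.
Qed.

Lemma sum_eq_pw2 (I J : finType) (F G : I -> J -> nat) :
  (forall i j, F i j <= G i j)%N -> (\sum_i \sum_j F i j = \sum_i \sum_j G i j)%N ->
  forall i j, F i j = G i j.
Proof.
move=> le eqs i; apply: sum_eq_pw; first exact: le i.
by apply: (sum_eq_pw _ eqs) => k; apply: leq_sum => j _.
Qed.

Lemma sum_eq_pw3 (I J K : finType) (F G : I -> J -> K -> nat) :
  (forall i j k, F i j k <= G i j k)%N ->
  (\sum_i \sum_j \sum_k F i j k = \sum_i \sum_j \sum_k G i j k)%N ->
  forall i j k, F i j k = G i j k.
Proof.
move=> le eqs i j; apply: sum_eq_pw; first exact: le i j.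
apply: (sum_eq_pw2 _ eqs) => k l; by apply: leq_sum => m _.
Qed.

Definition Struct (V : finType) (e : rel V) (I : {set V}) (b s : nat) : Prop :=
 [/\ #|I| = b, (forall u w, u \in I -> w \in I -> ~~ e u w),
     (forall u w, u \in I -> w \notin I -> e u w),
     (forall u, u \notin I -> #|[set y | (y \notin I) && e u y]| = s) &
     (forall u v w, u \notin I -> v \notin I -> w \notin I -> e u v -> e v w -> e u w -> False)].

Section Graph4.
Variable (V : finType) (e : rel V).
Hypothesis esym : forall x y, e x y = e y x.
Hypothesis eirr : forall x, ~~ e x x.
Variable (d : nat).
Hypothesis degd : forall x, (d <= deg e x)%N.
Hypothesis h2d : (#|V| < 2 * d)%N.
Hypothesis h3d : (3 * d <= 2 * #|V|)%N.

Let n := #|V|.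
Let b := (n - d)%N.
Let s := (d - b)%N.

Hypothesis heq : tr e = (3 * s * b * d)%N.

Lemma eq_Eo : Eo e = (n * d)%N.
Proof.
have [hs hb hn hd] := params h2d h3d.
have h1 := H1 esym degd h2d h3d; have h2 := H2 esym degd h2d h3d; have h3 := Eo_ge degd.
rewrite -/n -/b -/s in h1 h2 h3 hs hb hn hd.
rewrite heq in h1 h2.
have h4 : (3 * s * b * Eo e <= 3 * s * b * (n * d))%N.
  move: h1 h2; rewrite hn; natlia.
have h5 : (Eo e <= n * d)%N.
  by move: h4; rewrite leq_mul2l; case/orP => //; move: hs hb; natnia.
by apply/eqP; rewrite eqn_leq h5 h3.
Qed.

Lemma eq_deg x : deg e x = d.
Proof.
have := eq_Eo; rewrite /Eo /n -sum1_card big_distrl /=.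
under [in RHS]eq_bigr do rewrite mul1n.
under eq_bigr do rewrite -degE.
move=> H; symmetry; apply: (sum_eq_pw (F := fun _ => d)); last by rewrite H.
exact: degd.
Qed.

Lemma eq_W : (3 * Wsum e d = tr e * (2 * s + b))%N /\ (Wsum e d + s * b * Eo e = (s + b) * tr e)%N.
Proof.
have [hs hb hn hd] := params h2d h3d.
have h1 := H1 esym degd h2d h3d; have h2 := H2 esym degd h2d h3d.
rewrite -/n -/b -/s in h1 h2 hs hb hn hd.
rewrite eq_Eo in h2 *.
rewrite heq in h1 h2 *.
rewrite hn in h2 *.
split; move: h1 h2; natlia.
Qed.

Lemma edge_sumF : (\sum_x \sum_y (e x y * cn e x y * tp e d x y + s * b * e x y) = Wsum e d + s * b * Eo e)%N.
Proof.
rewrite /Wsum /Eo big_distrr -big_split /=; apply: eq_bigr => x _.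
by rewrite big_distrr -big_split /=.
Qed.

Lemma edge_sumG : (\sum_x \sum_y (s + b) * (e x y * cn e x y) = (s + b) * tr e)%N.
Proof.
rewrite (tr_edges esym) big_distrr /=; apply: eq_bigr => x _.
by rewrite big_distrr.
Qed.

Lemma edge_eq x y : e x y -> (cn e x y * tp e d x y + s * b = (s + b) * cn e x y)%N.
Proof.
move=> exy.
have := sum_eq_pw2 (F := fun x y => (e x y * cn e x y * tp e d x y + s * b * e x y)%N)
   (G := fun x y => ((s + b) * (e x y * cn e x y))%N).
rewrite edge_sumF edge_sumG (proj2 eq_W) => /(_ _ erefl x y).
rewrite exy !mul1n muln1; apply => u v.
case: (e u v); rewrite ?mul0n ?muln0 ?mul1n ?muln1 //.
exact: edge_ineq (cn_ge degd h2d u v).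
Qed.

Lemma edge_vals x y : e x y -> (cn e x y <= b)%N /\ (cn e x y = s \/ cn e x y = b).
Proof.
have [hs hb hn hd] := params h2d h3d.
rewrite -/n -/b -/s in hs hb hn hd.
move=> exy; have := edge_eq exy; have := cn_ge degd h2d x y.
rewrite -/n -/b -/s /tp.
case: (leqP (cn e x y) b) => h.
  move=> h1 h2; split => //; move: hs hb h; natnia.
move=> h1 h2; exfalso; move: hs hb h; natnia.
Qed.

Lemma tri_sumF : (\sum_x \sum_y \sum_z trn e x y z * (2 * s + b) = tr e * (2 * s + b))%N.
Proof.
rewrite /tr big_distrl /=; apply: eq_bigr => x _; rewrite big_distrl /=; apply: eq_bigr => y _.
by rewrite big_distrl.
Qed.

Lemma tri_eq x y z : e x y -> e y z -> e x z -> k3 e x y z = 0%N.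
Proof.
move=> exy eyz exz.
have := sum_eq_pw3 (F := fun x y z => (trn e x y z * (2 * s + b))%N)
  (G := fun x y z => (trn e x y z * (tp e d x y + tp e d y z + tp e d x z))%N).
rewrite tri_sumF (sum_tri_3 esym) -(proj1 eq_W) => /(_ _ erefl x y z).
rewrite /trn exy eyz exz !mul1n => h.
have {h} h : (2 * s + b = tp e d x y + tp e d y z + tp e d x z)%N.
  apply: h => u v w; rewrite leq_mul2l; apply/orP; right; exact: tri_ineq.
have [hs hb hn hd] := params h2d h3d.
rewrite -/n -/b -/s in hs hb hn hd.
have [c1 _] := edge_vals exy; have [c2 _] := edge_vals eyz; have [c3 _] := edge_vals exz.
move: h; rewrite /tp (minn_idPl c1) (minn_idPl c2) (minn_idPl c3) => h.
have := tri_bound e x y z; have := eq_deg x; have := eq_deg y; have := eq_deg z.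
rewrite -/n; move: h hn hd; natlia.
Qed.

End Graph4.

End M4.
Import M4.

Module M5.

Section Graph5.
Variable (V : finType) (e : rel V).
Hypothesis esym : forall x y, e x y = e y x.
Hypothesis eirr : forall x, ~~ e x x.
Variable (d : nat).
Hypothesis degd : forall x, (d <= deg e x)%N.
Hypothesis h2d : (#|V| < 2 * d)%N.
Hypothesis h3d : (3 * d <= 2 * #|V|)%N.

Let n := #|V|.
Let b := (n - d)%N.
Let s := (d - b)%N.

Hypothesis heq : tr e = (3 * s * b * d)%N.

Lemma some_edge : exists x y, e x y.
Proof.
case: (boolP [exists x, exists y, e x y]) => [/existsP [x /existsP [y exy]] | H0].
  by exists x, y.
exfalso.
have [hs hb hn hd] := params h2d h3d.
rewrite -/n -/b -/s in hs hb hn hd.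
have := eq_Eo esym degd h2d h3d heq; rewrite /Eo big1 => [|x _].
  rewrite -/n hn hd; move: hs; natnia.
rewrite big1 // => y _; move/existsPn: H0 => /(_ x) /existsPn /(_ y).
by move/negbTE => ->.
Qed.

Lemma heavy_edge : exists x y, e x y /\ cn e x y = b.
Proof.
case: (boolP [exists x, exists y, e x y && (cn e x y == b)]) =>
  [/existsP [x /existsP [y /andP [h1 /eqP h2]]] | H]; first by exists x, y.
exfalso.
have [hs hb hn hd] := params h2d h3d.
rewrite -/n -/b -/s in hs hb hn hd.
have alls : forall x y, e x y -> cn e x y = s.
  move=> x y exy; have [_ [] //] := edge_vals esym degd h2d h3d heq exy.
  move=> hcb; move/existsPn: H => /(_ x) /existsPn /(_ y).
  by rewrite exy hcb eqxx.
have htr : tr e = (s * Eo e)%N.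
  rewrite (tr_edges esym) /Eo big_distrr; apply: eq_bigr => x _.
  rewrite big_distrr; apply: eq_bigr => y _.
  by case E: (e x y) => /=; rewrite ?mul0n ?muln0 ?mul1n ?muln1 // alls.
rewrite (eq_Eo esym degd h2d h3d heq) heq -/n in htr.
have hsb : s = b.
  move: htr; rewrite hn hd; move: hs; natnia.
have [x [y exy]] := some_edge.
move/existsPn: H => /(_ x) /existsPn /(_ y).
by rewrite exy alls // hsb eqxx.
Qed.

Lemma struct_exists : exists I, Struct e I b s.
Proof.
have [hs hb hn hd] := params h2d h3d.
rewrite -/n -/b -/s in hs hb hn hd.
have [x0 [y0 [e0 c0]]] := heavy_edge.
pose I := Nb e x0 :&: Nb e y0.
have cI : #|I| = b by [].
have indep : forall u w, u \in I -> w \in I -> ~~ e u w.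
  move=> u w; rewrite !inE => /andP [xu yu] /andP [xw yw]; apply/negP => euw.
  have := tri_eq esym degd h2d h3d heq e0 yu xu.
  move/eqP; rewrite cards_eq0 => /eqP /setP /(_ w); rewrite !inE xw yw.
  by rewrite euw.
have NbI : forall u, u \in I -> Nb e u = ~: I.
  move=> u uI; apply/eqP; rewrite eqEcard; apply/andP; split.
    apply/subsetP => w; rewrite [w \in Nb e u]inE in_setC => euw; apply/negP => wI.
    by have := indep u w uI wI; rewrite euw.
  have := cardsC I; rewrite -deg_Nb (eq_deg esym degd h2d h3d heq u) cI -/n hn hd; natlia.
have cross : forall u w, u \in I -> w \notin I -> e u w.
  move=> u w uI wI; have := NbI u uI; move/setP => /(_ w).
  by rewrite [w \in Nb e u]inE in_setC wI => ->.
exists I; split => //.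
- move=> u uI.
  have := cardsID I (Nb e u); rewrite -deg_Nb (eq_deg esym degd h2d h3d heq u).
  have -> : Nb e u :&: I = I.
    apply/setP => w; rewrite in_setI; case wI: (w \in I); rewrite ?andbF ?andbT //.
    by rewrite inE esym cross.
  have -> : Nb e u :\: I = [set y | (y \notin I) && e u y].
    by apply/setP => w; rewrite !inE.
  rewrite cI => h; apply/eqP; by rewrite -(eqn_add2l b) h hd.
- move=> u v w uI vI wI euv evw euw.
  have : (0 < #|I|)%N by rewrite cI; move: hs hb; natlia.
  case/card_gt0P => z zI.
  have := tri_eq esym degd h2d h3d heq euv evw euw.
  move/eqP; rewrite cards_eq0 => /eqP /setP /(_ z); rewrite !inE.
  by rewrite (esym u z) (esym v z) (esym w z) !cross.
Qed.

End Graph5.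

End M5.
Import M5.

Module M6.

Section Graph6.
Variable (V : finType) (e : rel V).
Hypothesis esym : forall x y, e x y = e y x.
Hypothesis eirr : forall x, ~~ e x x.
Variables (I : {set V}) (b s : nat).
Hypothesis hS : Struct e I b s.

Let d := #|~: I|.

Lemma cnC u w : cn e u w = cn e w u.
Proof. by rewrite /cn setIC. Qed.

Lemma S_adjI u w : u \in I -> e u w = (w \notin I).
Proof.
case: hS => _ ind cr _ _ uI.
case wI: (w \in I) => /=; first exact/negbTE/ind.
by apply: cr => //; rewrite wI.
Qed.

Lemma S_adjO u w : u \notin I -> w \in I -> e u w.
Proof. by move=> uI wI; rewrite esym S_adjI // uI. Qed.

Lemma S_NbI u : u \in I -> Nb e u = ~: I.
Proof. by move=> uI; apply/setP => w; rewrite !inE S_adjI. Qed.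

Lemma S_degI u : u \in I -> deg e u = d.
Proof. by move=> uI; rewrite deg_Nb S_NbI. Qed.

Lemma S_degO u : u \notin I -> deg e u = (b + s)%N.
Proof.
case: hS => cI _ _ cO _ uI.
have := cardsID I (Nb e u); rewrite -deg_Nb => <-.
have -> : Nb e u :&: I = I.
  apply/setP => w; rewrite in_setI; case wI: (w \in I); rewrite ?andbF ?andbT //.
  by rewrite inE S_adjO.
have -> : Nb e u :\: I = [set y | (y \notin I) && e u y].
  by apply/setP => w; rewrite !inE.
by rewrite cI cO.
Qed.

Lemma S_cnIO u w : u \in I -> w \notin I -> cn e u w = s.
Proof.
case: hS => _ _ _ cO _ uI wI.
rewrite /cn S_NbI // -(cO w wI); apply: eq_card => y; rewrite !inE.
by rewrite andbC.
Qed.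

Lemma S_cnOO u w : u \notin I -> w \notin I -> e u w -> cn e u w = b.
Proof.
case: hS => cI _ _ _ tf uI wI euw.
rewrite /cn -cI; apply: eq_card => y; rewrite !inE.
case yI: (y \in I).
  by rewrite (S_adjO uI yI) (S_adjO wI yI).
apply/negbTE/andP => [] [euy ewy].
by apply: (tf u w y) => //; rewrite yI.
Qed.

Lemma S_tr : tr e = (3 * b * d * s)%N.
Proof.
have [cI _ _ cO _] := hS.
rewrite (tr_edges esym) (bigID (fun u => u \in I)) /=.
rewrite (eq_bigr (fun _ => (d * s)%N)); last first.
  move=> u uI; rewrite (eq_bigr (fun w => ((w \in ~: I) : nat) * s)%N); last first.
    move=> w _; rewrite S_adjI // inE.
    by case wI: (w \in I) => //=; rewrite S_cnIO ?wI.
  by rewrite -big_distrl /= sum_mem.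
rewrite [X in (X + _)%N](_ : _ = #|I| * (d * s))%N; last first.
  by rewrite -sum_nat_const; apply: eq_bigl.
rewrite (eq_bigr (fun _ => (2 * b * s)%N)); last first.
  move=> u uI.
  rewrite (eq_bigr (fun w => ((w \in I) : nat) * s + ((w \notin I) && e u w : nat) * b)%N); last first.
    move=> w _; case wI: (w \in I) => /=.
      by rewrite S_adjO //= mul1n cnC S_cnIO // mul1n mul0n addn0.
    case euw: (e u w) => //=.
    by rewrite !mul1n mul0n S_cnOO ?wI.
  rewrite big_split /= -!big_distrl /= sum_mem.
  rewrite (eq_bigr (fun w => ((w \in [set y | (y \notin I) && e u y]) : nat))); last first.
    by move=> w _; rewrite inE.
  rewrite sum_mem cO // cI; natlia.
rewrite [X in (_ + X)%N](_ : _ = #|~: I| * (2 * b * s))%N; last first.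
  by rewrite -sum_nat_const; apply: eq_bigl => u; rewrite inE.
rewrite cI -/d; natlia.
Qed.

Lemma S_kr : (2 * kr e 3 = b * d * s)%N.
Proof.
have := kr3_tr esym eirr; rewrite S_tr; natlia.
Qed.

End Graph6.

End M6.
Import M6.

Module M7.

Lemma clique3_elems (T : finType) (f : rel T) (A : {set T}) :
  is_clique f 3 A -> exists x y z, [/\ x \in A, y \in A, z \in A & [/\ f x y, f y z & f x z]].
Proof.
case/andP => /eqP cA /forallP cl.
have adj : forall u v, u \in A -> v \in A -> u != v -> f u v.
  move=> u v uA vA uv; have := cl u; rewrite uA /= => /forallP /(_ v).
  by rewrite vA uv.
have : (0 < #|A|)%N by rewrite cA.
case/card_gt0P => x xA.
have c2 : #|A :\ x| = 2.
  by have := cardsD1 x A; rewrite xA cA => /eqP; rewrite eqSS => /eqP.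
have : (0 < #|A :\ x|)%N by rewrite c2.
case/card_gt0P => y; rewrite in_setD1 => /andP [yx yA].
have c1 : #|A :\ x :\ y| = 1.
  have := cardsD1 y (A :\ x); rewrite in_setD1 yx yA c2 => /eqP; rewrite eqSS => /eqP.
  by [].
have : (0 < #|A :\ x :\ y|)%N by rewrite c1.
case/card_gt0P => z; rewrite !in_setD1 => /and3P [zy zx zA].
exists x, y, z; split => //; split; apply: adj => //.
- by rewrite eq_sym.
- by rewrite eq_sym.
- by rewrite eq_sym.
Qed.

Lemma tri_clique (T : finType) (f : rel T) (fsym : forall x y, f x y = f y x)
  (firr : forall x, ~~ f x x) x y z :
  f x y -> f y z -> f x z -> is_clique f 3 [set x; y; z].
Proof.
move=> Exy Eyz Exz.
rewrite /is_clique card3 ?(adj_neq firr Exy) ?(adj_neq firr Eyz) ?(adj_neq firr Exz) //=.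
apply/forallP => u; apply/implyP => /in3P Hu.
apply/forallP => v; apply/implyP => /in3P Hv.
apply/implyP => uv.
case: Hu uv => ->; case: Hv => -> //; rewrite ?eqxx //;
rewrite ?Exy ?Eyz ?Exz // => _; by rewrite fsym ?Exy ?Eyz ?Exz.
Qed.

Lemma handshake (T : finType) (f : rel T) (fsym : forall x y, f x y = f y x)
  (firr : forall x, ~~ f x x) : ~~ odd (Eo f).
Proof.
rewrite /Eo.
have -> : (\sum_x \sum_y (f x y : nat) =
   \sum_x \sum_y (f x y && (enum_rank x < enum_rank y) : nat) +
   \sum_x \sum_y (f x y && (enum_rank y < enum_rank x) : nat))%N.
  rewrite -big_split /=; apply: eq_bigr => x _; rewrite -big_split /=.
  apply: eq_bigr => y _.
  case fxy: (f x y) => //=.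
  have xy := adj_neq firr fxy.
  have rxy : enum_rank x != enum_rank y.
    by apply: contra xy => /eqP /enum_rank_inj ->.
  by case: ltngtP rxy => // /val_inj ->; rewrite eqxx.
have -> : (\sum_x \sum_y (f x y && (enum_rank y < enum_rank x) : nat) =
   \sum_x \sum_y (f x y && (enum_rank x < enum_rank y) : nat))%N.
  rewrite exchange_big /=; apply: eq_bigr => x _; apply: eq_bigr => y _.
  by rewrite fsym.
by rewrite addnn odd_double.
Qed.

Lemma nbigmin_ge (I : finType) (P : pred I) (F : I -> nat) x m :
  (m <= x)%N -> (forall i, P i -> m <= F i)%N -> (m <= \big[minn/x]_(i | P i) F i)%N.
Proof.
move=> mx mF; apply: (big_ind (fun v => m <= v)%N) => //.
by move=> a c ha hc; rewrite leq_min ha hc.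
Qed.

Lemma nbigmin_le (I : finType) (P : pred I) (F : I -> nat) x i :
  P i -> (\big[minn/x]_(j | P j) F j <= F i)%N.
Proof.
move=> Pi; have : i \in index_enum I by rewrite mem_index_enum.
elim: (index_enum I) => // a r IH; rewrite inE big_cons; case/orP => [/eqP <-| ir].
  by rewrite Pi geq_minl.
case: (P a) => //=; last exact: IH ir.
exact: leq_trans (geq_minr _ _) (IH ir).
Qed.

Lemma nbigmin_att (I : finType) (P : pred I) (F : I -> nat) x :
  \big[minn/x]_(j | P j) F j = x \/ exists i, P i /\ F i = \big[minn/x]_(j | P j) F j.
Proof.
apply: (big_ind (fun v => v = x \/ exists i, P i /\ F i = v)).
- by left.
- by move=> a c ha hc; case: (leqP a c) => h.
- by move=> i Pi; right; exists i.
Qed.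

End M7.
Import M7.

Module M8.

Section Construct.
Variables (n m b s : nat) (f : rel 'I_m).
Hypothesis fsym : forall x y, f x y = f y x.
Hypothesis firr : forall x, ~~ f x x.
Hypothesis freg : regular f s.
Hypothesis ftf : kr f 3 = 0%N.
Hypothesis hmn : (m <= n)%N.
Hypothesis hb : (n - m = b)%N.

Definition emb (i : 'I_m) : 'I_n := widen_ord hmn i.
Definition rC (x y : 'I_n) : bool :=
  [exists i, exists j, (emb i == x) && (emb j == y) && f i j] || ((x < m) != (y < m))%N.
Definition EC : {set 'I_n * 'I_n} := [set p | rC p.1 p.2].
Definition IC : {set 'I_n} := [set x : 'I_n | ~~ (x < m)%N].

Lemma relEC (x y : 'I_n) : rel_of EC x y = rC x y.
Proof. by rewrite /rel_of inE. Qed.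

Lemma emb_inj : injective emb.
Proof. by move=> i j h; apply: val_inj; exact: (congr1 val h). Qed.

Lemma emb_lt i : (emb i < m)%N.
Proof. by rewrite /emb /= ltn_ord. Qed.

Lemma embP (x : 'I_n) : (x < m)%N -> exists i, emb i = x.
Proof. by move=> hx; exists (Ordinal hx); apply: val_inj. Qed.

Lemma rC_emb i j : rC (emb i) (emb j) = f i j.
Proof.
rewrite /rC !emb_lt /= orbF; apply/existsP/idP.
  by case=> i' /existsP [j' /andP [/andP [/eqP /emb_inj -> /eqP /emb_inj ->] ->]].
by move=> fij; exists i; apply/existsP; exists j; rewrite !eqxx fij.
Qed.

Lemma rC_cross (x y : 'I_n) : ((x < m) != (y < m))%N -> rC x y.
Proof. by move=> h; rewrite /rC h orbT. Qed.

Lemma rC_out (x y : 'I_n) : ~~ (x < m)%N -> ~~ (y < m)%N -> ~~ rC x y.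
Proof.
move=> hx hy; rewrite /rC negb_or; apply/andP; split.
  apply/existsPn => i; apply/existsPn => j; apply/negP => /andP [/andP [/eqP ex _] _].
  by move: hx; rewrite -ex emb_lt.
by rewrite (negbTE hx) (negbTE hy).
Qed.

Lemma rC_sym (x y : 'I_n) : rC x y = rC y x.
Proof.
case: (boolP (x < m)%N) => hx; case: (boolP (y < m)%N) => hy.
- have [i <-] := embP hx; have [j <-] := embP hy.
  by rewrite !rC_emb fsym.
- rewrite (@rC_cross x y); last by rewrite hx (negbTE hy).
  by rewrite (@rC_cross y x) // hx (negbTE hy).
- rewrite (@rC_cross x y); last by rewrite hy (negbTE hx).
  by rewrite (@rC_cross y x) // hy (negbTE hx).
- by rewrite (negbTE (rC_out hx hy)) (negbTE (rC_out hy hx)).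
Qed.

Lemma rC_irr (x : 'I_n) : ~~ rC x x.
Proof.
case: (boolP (x < m)%N) => hx.
  by have [i <-] := embP hx; rewrite rC_emb firr.
exact: rC_out.
Qed.

Lemma EC_simple : simpleb EC.
Proof.
apply/andP; split.
  apply/forallP => x; apply/forallP => y; rewrite !inE /=.
  by rewrite rC_sym.
by apply/forallP => x; rewrite inE /= rC_irr.
Qed.

Lemma EC_sym (x y : 'I_n) : rel_of EC x y = rel_of EC y x.
Proof. by rewrite !relEC rC_sym. Qed.

Lemma EC_irr (x : 'I_n) : ~~ rel_of EC x x.
Proof. by rewrite relEC rC_irr. Qed.

Lemma card_ICc : #|~: IC| = m.
Proof.
have -> : ~: IC = emb @: setT.
  apply/setP => x; rewrite !inE negbK; apply/idP/imsetP.
    by move=> hx; have [i <-] := embP hx; exists i.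
  by case=> i _ ->; rewrite emb_lt.
by rewrite card_imset ?cardsT ?card_ord //; exact: emb_inj.
Qed.

Lemma card_IC : #|IC| = b.
Proof.
have := cardsC IC; rewrite card_ICc card_ord => h.
move: h hb; set k := #|IC|; clear; natlia.
Qed.

Lemma EC_struct : Struct (rel_of EC) IC b s.
Proof.
split.
- exact: card_IC.
- move=> u w; rewrite !inE => hu hw; rewrite relEC; exact: rC_out.
- move=> u w; rewrite !inE negbK => hu hw; rewrite relEC; apply: rC_cross.
  by rewrite hw (negbTE hu).
- move=> u; rewrite inE negbK => hu.
  have [i <-] := embP hu.
  rewrite -(freg i) /deg.
  have -> : [set y | (y \notin IC) && rel_of EC (emb i) y] = emb @: [set j | f i j].
    apply/setP => y; rewrite !inE negbK relEC; apply/idP/imsetP.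
      case/andP => hy; have [j <-] := embP hy; rewrite rC_emb => fij.
      by exists j; rewrite ?inE.
    by case=> j; rewrite inE => fij ->; rewrite emb_lt rC_emb.
  by rewrite card_imset //; exact: emb_inj.
- move=> u v w; rewrite !inE !negbK => hu hv hw.
  have [i <-] := embP hu; have [j <-] := embP hv; have [k <-] := embP hw.
  rewrite !relEC !rC_emb => fij fjk fik.
  have := tri_clique fsym firr fij fjk fik.
  move=> cl; move: ftf; rewrite /kr => /eqP; rewrite cards_eq0 => /eqP /setP /(_ [set i; j; k]).
  by rewrite !inE cl.
Qed.

Hypothesis hbs : (b + s = m)%N.
Hypothesis hn : (0 < n)%N.

Lemma EC_deg (x : 'I_n) : deg (rel_of EC) x = m.
Proof.
case: (boolP (x \in IC)) => hx.
  by rewrite (S_degI EC_struct hx) card_ICc.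
by rewrite (S_degO EC_sym EC_struct hx) hbs.
Qed.

Lemma EC_mindeg : mindegb EC m.
Proof.
apply/andP; split.
  by apply/existsP; exists (Ordinal hn); rewrite EC_deg.
by apply/forallP => x; rewrite EC_deg.
Qed.

Lemma EC_kr : (2 * kr (rel_of EC) 3 = b * m * s)%N.
Proof. by rewrite (S_kr EC_sym EC_irr EC_struct) card_ICc. Qed.

End Construct.

End M8.
Import M8.

Module M9.

Section Transfer.
Variable (V : finType) (e : rel V).
Hypothesis esy : forall x y, e x y = e y x.
Hypothesis eirr : forall x, ~~ e x x.
Variables (I : {set V}) (b s : nat).
Hypothesis hS : Struct e I b s.

Lemma S_notri u v w : u \notin I -> v \notin I -> w \notin I -> e u v -> e v w -> e u w -> False.
Proof. by case: hS => _ _ _ _ tf; apply: tf. Qed.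

Lemma S_krin0 : kr_in e (~: I) 3 = 0%N.
Proof.
apply/eqP; rewrite cards_eq0; apply/eqP/setP => A; rewrite !inE.
apply/negbTE/negP => /andP [sub /clique3_elems [x [y [z [xA yA zA [exy eyz exz]]]]]].
have xI : x \notin I by have := subsetP sub x xA; rewrite inE.
have yI : y \notin I by have := subsetP sub y yA; rewrite inE.
have zI : z \notin I by have := subsetP sub z zA; rewrite inE.
exact: (S_notri xI yI zI exy eyz exz).
Qed.

Variable (m : nat).
Hypothesis hm : #|~: I| = m.

Definition hemb (i : 'I_m) : V := enum_val (cast_ord (esym hm) i).

Lemma hemb_out i : hemb i \notin I.
Proof. by have := enum_valP (cast_ord (esym hm) i); rewrite inE. Qed.

Lemma hemb_inj : injective hemb.
Proof. by move=> i j /enum_val_inj /cast_ord_inj. Qed.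

Lemma hemb_onto y : y \notin I -> exists i, hemb i = y.
Proof.
move=> yI; have yA : y \in ~: I by rewrite inE.
exists (cast_ord hm (enum_rank_in yA y)).
by rewrite /hemb cast_ordK enum_rankK_in.
Qed.

Definition ftr : rel 'I_m := fun i j => e (hemb i) (hemb j).

Lemma ftr_simple : simple_graph ftr.
Proof. by split => [i j|i]; rewrite /ftr; [exact: esy | exact: eirr]. Qed.

Lemma ftr_reg : regular ftr s.
Proof.
move=> i; case: hS => _ _ _ cO _.
rewrite -(cO _ (hemb_out i)) /deg.
have -> : [set y | (y \notin I) && e (hemb i) y] = hemb @: [set j | ftr i j].
  apply/setP => y; rewrite !inE; apply/idP/imsetP.
    case/andP => yI eiy; have [j ej] := hemb_onto yI.
    by exists j; rewrite // inE /ftr ej.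
  by case=> j; rewrite inE /ftr => fij ->; rewrite hemb_out.
by rewrite card_imset //; exact: hemb_inj.
Qed.

Lemma ftr_kr : kr ftr 3 = 0%N.
Proof.
apply/eqP; rewrite cards_eq0; apply/eqP/setP => A; rewrite !inE.
apply/negbTE/negP => /clique3_elems [x [y [z [_ _ _ [exy eyz exz]]]]].
exact: (S_notri (hemb_out x) (hemb_out y) (hemb_out z) exy eyz exz).
Qed.

End Transfer.

End M9.
Import M9.

Module M10.
Import GRing.Theory Num.Theory.

Lemma pp2 n b : (0 < b)%N -> (2 * b < n)%N -> (n <= 3 * b)%N -> pp n b = 2%N.
Proof.
move=> b0 h1 h2; rewrite /pp.
have -> : (n + b - 1 = 3 * b + (n - 2 * b - 1))%N by move: h1 h2 b0; natlia.
rewrite divnMDl // divn_small //; move: h1 h2 b0; natlia.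
Qed.

Lemma graph_bound (V : finType) (e : rel V) (es : forall x y, e x y = e y x)
  (ei : forall x, ~~ e x x) (d : nat) (degd : forall x, (d <= deg e x)%N)
  (h2 : (#|V| < 2 * d)%N) (h3 : (3 * d <= 2 * #|V|)%N) :
  ((#|V| - d) * d * (d - (#|V| - d)) <= 2 * kr e 3)%N.
Proof.
have := main_bound es degd h2 h3; rewrite -(kr3_tr es ei).
move: (#|V| - d)%N => b; move: (d - b)%N => s; natlia.
Qed.

Lemma graph_eq (V : finType) (e : rel V) (es : forall x y, e x y = e y x)
  (ei : forall x, ~~ e x x) (d : nat) (degd : forall x, (d <= deg e x)%N)
  (h2 : (#|V| < 2 * d)%N) (h3 : (3 * d <= 2 * #|V|)%N) :
  (2 * kr e 3 = (#|V| - d) * d * (d - (#|V| - d)))%N ->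
  exists I, Struct e I (#|V| - d) (d - (#|V| - d)).
Proof.
move=> h; apply: (struct_exists es degd h2 h3); rewrite -(kr3_tr es ei).
move: h; move: (#|V| - d)%N => b; move: (d - b)%N => s; natlia.
Qed.

Lemma family_of_struct (V : finType) (e : rel V) (es : forall x y, e x y = e y x)
  (ei : forall x, ~~ e x x) n b s (hV : #|V| = n) (hp : pp n b = 2%N)
  (hs : (n - 2 * b)%N = s) (I : {set V}) (hS : Struct e I b s) : in_family n b e.
Proof.
rewrite /in_family hp.
pose part := fun x : V => (if x \in I then @Ordinal 2 1 isT else @Ordinal 2 0 isT).
exists part; cbv zeta.
have V0 : [set x | val (part x) == 0%N] = ~: I.
  by apply/setP => x; rewrite !inE /part; case: (x \in I).
have V1 : [set x | val (part x) == 1%N] = I.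
  by apply/setP => x; rewrite !inE /part; case: (x \in I).
have [cI ind cr cO tf] := hS.
split.
- rewrite V0 mul1n; have := cardsC I; rewrite hV cI; natlia.
- move=> i /andP [i0 i2]; have -> : i = 1%N by move: i0 i2; natlia.
  by rewrite V1.
- move=> x y; rewrite /part; case xI: (x \in I); case yI: (y \in I) => // _.
    by apply: cr; rewrite ?yI.
  by rewrite es; apply: cr; rewrite ?xI.
- move=> x y; rewrite /part; case xI: (x \in I); case yI: (y \in I) => //= _ _.
  exact: ind.
- split.
    move=> x; rewrite V0 inE => xI; rewrite hs -(cO x xI).
    by apply: eq_card => y; rewrite !inE.
  by move=> f _ _; rewrite V0 (S_krin0 hS).
Qed.

Lemma struct_of_family (V : finType) (e : rel V) (es : forall x y, e x y = e y x)
  (ei : forall x, ~~ e x x) n b s (hp : pp n b = 2%N)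
  (hs : (n - 2 * b)%N = s) (hF : feasible n b) (hf : in_family n b e) :
  exists I, Struct e I b s.
Proof.
move: hF hf; rewrite /feasible /in_family hp => [[_ [f0 [f0s f0r f0k]]]] [part].
cbv zeta => [[c0 c1 c2 c3 [c4 c5]]].
have k0 := c5 f0 f0s f0r; rewrite f0k leqn0 in k0.
pose I := [set x | val (part x) == 1%N].
have pv : forall x, val (part x) = 0%N \/ val (part x) = 1%N.
  by move=> x; case: (part x) => [[|[|k]] hk] /=; [left | right | ].
have inI : forall x, (x \in I) = (val (part x) == 1%N) by move=> x; rewrite inE.
have notI : forall x, (x \notin I) = (val (part x) == 0%N).
  by move=> x; rewrite inI; case: (pv x) => ->.
exists I; split.
- exact: c1 1%N erefl.
- move=> u w; rewrite !inI => /eqP pu /eqP pw; apply: c3.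
    by apply: val_inj; rewrite pu pw.
  by rewrite pu.
- move=> u w; rewrite inI notI => /eqP pu /eqP pw; apply: c2.
  by apply/eqP => h; move: pu; rewrite h pw.
- move=> u uI; have hu : u \in [set x | val (part x) == 0%N] by move: uI; rewrite notI inE.
  rewrite -hs -(c4 u hu).
  by apply: eq_card => y; rewrite !inE; case: (pv y) => ->.
- move=> u v w uI vI wI euv evw euw.
  have cl := tri_clique es ei euv evw euw.
  have : [set u; v; w] \in [set A : {set V} | (A \subset [set x | val (part x) == 0%N]) && is_clique e 3 A].
    rewrite inE cl andbT; apply/subsetP => y /in3P [] ->; rewrite inE -notI //.
  move=> hA; move/eqP: k0; rewrite /kr_in => /eqP; rewrite cards_eq0 => /eqP h0.
  by rewrite h0 inE in hA.
Qed.

Lemma feasible_of_struct (V : finType) (e : rel V) (es : forall x y, e x y = e y x)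
  (ei : forall x, ~~ e x x) n b s (hV : #|V| = n) (hp : pp n b = 2%N)
  (hs : (n - 2 * b)%N = s) (hbn : (2 * b <= n)%N) (I : {set V}) (hS : Struct e I b s) :
  feasible n b.
Proof.
have [cI _ _ _ _] := hS.
have hcI : #|~: I| = (n - b)%N by have := cardsC I; rewrite hV cI; natlia.
rewrite /feasible hp; split.
  have allD : forall x, deg e x = (n - b)%N.
    move=> x; case: (boolP (x \in I)) => xI.
      by rewrite (S_degI hS xI) hcI.
    by rewrite (S_degO es hS xI) -hs; move: hbn; natlia.
  have hE : Eo e = (n * (n - b))%N.
    rewrite /Eo (eq_bigr (fun x => (n - b)%N)); last by move=> x _; rewrite -degE allD.
    by rewrite sum_nat_const cardT -cardE hV.
  have := handshake es ei; rewrite hE oddM.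
  by [].
have hm : #|~: I| = (n - (2 - 1) * b)%N by rewrite mul1n.
exists (ftr e hm); split.
- exact: (ftr_simple es ei hm).
- rewrite hs; exact: (ftr_reg hS hm).
- exact: (ftr_kr hS hm).
Qed.

Lemma rat_half (a c : nat) : ((a%:R : rat) = c%:R / 2%:R)%R <-> (2 * a = c)%N.
Proof.
have n2 : (2%:R : rat) != 0%R by rewrite pnatr_eq0.
split => h.
  apply/eqP; rewrite -(eqr_nat rat) natrM h mulrC divfK //.
by rewrite -h natrM (mulrC (2%:R)%R (a%:R)%R) mulfK.
Qed.

Lemma rat_half_le (a c : nat) : ((c%:R / 2%:R : rat) <= a%:R)%R = (c <= 2 * a)%N.
Proof.
rewrite ler_pdivrMr ?ltr0n // -natrM ler_nat mulnC.
by [].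
Qed.

End M10.
Import M10.

Module M11.

Lemma simpleb_P n (E : {set 'I_n * 'I_n}) : simpleb E ->
  (forall x y, rel_of E x y = rel_of E y x) /\ (forall x, ~~ rel_of E x x).
Proof.
case/andP => /forallP h1 /forallP h2; split.
  by move=> x y; have /forallP /(_ y) /eqP := h1 x.
by move=> x; exact: h2 x.
Qed.

Lemma mindegb_P n (E : {set 'I_n * 'I_n}) d : mindegb E d -> forall x, (d <= deg (rel_of E) x)%N.
Proof. by case/andP => _ /forallP. Qed.

Lemma simple_P (V : finType) (e : rel V) : simple_graph e ->
  (forall x y, e x y = e y x) /\ (forall x, ~~ e x x).
Proof. by []. Qed.

Section GR.
Import GRing.Theory Num.Theory.
Local Open Scope ring_scope.
Lemma gr_val n b d s : pp n b = 2%N -> (n - 2 * b = s)%N -> (n - b = d)%N -> (2 * b <= n)%N ->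
  gr_n 3 n b = (((b * d * s)%N)%:R / 2%:R)%R.
Proof.
move=> hp hs hd hbn; rewrite /gr_n hp /=.
have c1 : 'C(2 - 1, 3) = 0%N by [].
have c2 : 'C(2 - 1, 3 - 1) = 0%N by [].
have c3 : 'C(2 - 1, 3 - (0 + 1).+1) = 1%N by [].
rewrite c1 c2 c3 !mul0r !add0r.
have h : (2%:R - 1 : rat)%R = 1%R by rewrite -[2%N]/(1+1)%N natrD addrK.
rewrite h !mul1r expr1.
have e1 : (n%:R - 2%:R * b%:R : rat)%R = s%:R by rewrite -natrM -natrB // hs.
have e2 : (n%:R - b%:R : rat)%R = d%:R.
  by rewrite -natrB ?hd //; apply: leq_trans hbn; rewrite leq_pmull.
rewrite e1 e2 -!mulrA -!natrM mulrC; congr (_ * _)%R; congr (_%:R)%R.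
by rewrite mulnC (mulnC d b).
Qed.
Lemma gr_eq n b : pp n b = 2%N ->
  gr_n 3 n b = 1 / 2%:R * (n%:R - 2%:R * b%:R) * (n%:R - b%:R) * b%:R.
Proof.
move=> hp; rewrite /gr_n hp /=.
have c1 : 'C(2 - 1, 3) = 0%N by [].
have c2 : 'C(2 - 1, 3 - 1) = 0%N by [].
have c3 : 'C(2 - 1, 3 - (0 + 1).+1) = 1%N by [].
rewrite c1 c2 c3 !mul0r !add0r.
have h : (2%:R - 1 : rat)%R = 1%R by rewrite -[2%N]/(1+1)%N natrD addrK.
by rewrite h !mul1r expr1.
Qed.
End GR.

End M11.
Import M11.

Import Order.TTheory GRing.Theory Num.Theory.
Local Open Scope ring_scope.

Theorem mainTheorem1 (n d : nat) :
  (0 < n)%N -> (0 < d)%N -> (n < 2 * d)%N -> (3 * d <= 2 * n)%N ->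
  let b := (n - d)%N in
  [/\ gr_n 3 n b <= (kr_min 3 n d)%:R,
      gr_n 3 n b = (1 / 2%:R) * (n%:R - 2%:R * b%:R) * (n%:R - b%:R) * b%:R,
      (kr_min 3 n d)%:R = gr_n 3 n b <-> feasible n b &
      feasible n b ->
        forall (V : finType) (e : rel V), #|V| = n -> simple_graph e -> has_mindeg e d ->
          ((kr e 3)%:R = gr_n 3 n b <-> in_family n b e)].
Proof.
move=> n0 d0 h2 h3 b.
pose s := (d - b)%N.
have bpos : (0 < b)%N by rewrite /b; move: n0 h2 h3; natlia.
have hbn : (2 * b <= n)%N by rewrite /b; move: h2 h3; natlia.
have hp : pp n b = 2%N by apply: pp2 => //; rewrite /b; move: h2 h3; natlia.
have hs : (n - 2 * b = s)%N by rewrite /s /b; move: h2 h3; natlia.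
have hd : (n - b = d)%N by rewrite /b; move: h2 h3; natlia.
have hgr := gr_val hp hs hd hbn.
have core : forall E : {set 'I_n * 'I_n}, simpleb E && mindegb E d ->
    (b * d * s <= 2 * kr (rel_of E) 3)%N.
  move=> E /andP [/simpleb_P [es ei] /mindegb_P md].
  have := graph_bound es ei md; rewrite card_ord; apply => //.
have low : (b * d * s <= 2 * kr_min 3 n d)%N.
  rewrite /kr_min; apply: (big_ind (fun v => b * d * s <= 2 * v)%N) => //.
  - have hbn' : (b <= n)%N by exact: leq_subr.
    have hdn : (d <= n)%N by move: h3; natlia.
    have hsn : (s <= n)%N by rewrite /s /b; move: h3; natlia.
    rewrite !expnS expn0 muln1 mulnA.
    apply: leq_trans (leq_mul (leq_mul hbn' hdn) hsn) _.
    natnia.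
  - by move=> a c ha hc; case: (leqP a c).
split.
- by rewrite hgr rat_half_le.
- exact: gr_eq.
- rewrite hgr rat_half; split.
  + move=> hk.
    case: (nbigmin_att (fun E : {set 'I_n * 'I_n} => simpleb E && mindegb E d)
              (fun E => kr (rel_of E) 3) (n ^ 3)) => [h | [E [PE hE]]].
      exfalso; move: hk; rewrite /kr_min h => hk.
      have hbn' : (b <= n)%N by exact: leq_subr.
      have hdn : (d <= n)%N by move: h3; natlia.
      have hsn : (s <= n)%N by rewrite /s /b; move: h3; natlia.
      have : (b * d * s <= n ^ 3)%N.
        rewrite !expnS expn0 muln1 mulnA.
        exact: leq_mul (leq_mul hbn' hdn) hsn.
      rewrite -hk; have : (0 < n ^ 3)%N by rewrite expn_gt0 n0.
      move: (n ^ 3)%N => k; natlia.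
    move: hk; rewrite /kr_min -hE => hk.
    case/andP: PE => /simpleb_P [es ei] /mindegb_P md.
    have h2' : (#|'I_n| < 2 * d)%N by rewrite card_ord.
    have h3' : (3 * d <= 2 * #|'I_n|)%N by rewrite card_ord.
    have hk' : (2 * kr (rel_of E) 3 = (#|'I_n| - d) * d * (d - (#|'I_n| - d)))%N.
      by rewrite card_ord.
    have [I hI] := graph_eq es ei md h2' h3' hk'.
    rewrite card_ord in hI.
    exact: (feasible_of_struct es ei (card_ord n) hp hs hbn hI).
  + move=> hF; apply/eqP; rewrite eqn_leq low andbT.
    move: (hF); rewrite /feasible hp => [[_ [f0 [[f0s f0i] f0r f0k]]]].
    set m := (n - (2 - 1) * b)%N in f0 f0s f0i f0r f0k.
    have hmd : m = d by rewrite /m mul1n.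
    have hmn : (m <= n)%N by rewrite hmd; move: h3; natlia.
    have hnm : (n - m = b)%N by rewrite hmd /b; move: h3; natlia.
    have hbs : (b + s = m)%N by rewrite hmd /s; move: h2 h3; natlia.
    have f0r' : regular f0 s by rewrite -hs.
    have := EC_kr f0s f0i f0r' f0k hmn hnm.
    move=> hk; have hk2 : (2 * kr (rel_of (EC f0 hmn)) 3 = b * d * s)%N by rewrite hk hmd.
    rewrite -hk2 leq_mul2l /=.
    rewrite /kr_min.
    apply: (nbigmin_le (P := fun E : {set 'I_n * 'I_n} => simpleb E && mindegb E d)).
    rewrite EC_simple //=.
    rewrite -hmd; exact: (EC_mindeg f0s f0i f0r' f0k hmn hnm hbs n0).
- move=> hF V e hV /simple_P [es ei] [_ md].
  rewrite hgr rat_half; split.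
  + move=> hk.
    have h2' : (#|V| < 2 * d)%N by rewrite hV.
    have h3' : (3 * d <= 2 * #|V|)%N by rewrite hV.
    have hk' : (2 * kr e 3 = (#|V| - d) * d * (d - (#|V| - d)))%N by rewrite hV.
    have [I hI] := graph_eq es ei md h2' h3' hk'.
    rewrite hV in hI.
    exact: (family_of_struct es ei hV hp hs hI).
  + move=> hf.
    have [I hI] := struct_of_family es ei hp hs hF hf.
    rewrite (S_kr es ei hI).
    have [cI _ _ _ _] := hI.
    have : #|~: I| = d by have := cardsC I; rewrite hV cI -hd; natlia.
    by move=> ->.
Qed.
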